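(* Consider the waning-immunity model described in the context. There exists a constant $C>0$ such that for all sufficiently small $\delta\ge0$, the set of values $I^*$ of endemic equilibria with $I^*\in[0,1]$ is contained in $J_1\cup J_2$, where $J_i=[y_i-C\sqrt\delta,\,y_i+C\sqrt\delta]$ and $y_1\le y_2$ are the (real) roots of $$1+\frac{r}{\beta_0x+\mu}-\frac{\beta_n}{\beta_nx+\mu+\omega_n}-\frac{\omega_n\beta_0}{(\beta_0x+\mu)(\beta_nx+\mu+\omega_n)}=0.$$ In particular, if this equation has no real roots, or no roots in $[0,1]$, then for $\delta$ small enough there are no endemic equilibria with $I^*\in[0,1]$. The latter is the case when $(\omega_n+\mu)(\mu+r)>\beta_0\omega_n+\beta_n\mu$. If $(\omega_n+\mu)(\mu+r)<\beta_0\omega_n+\beta_n\mu$, then the equation has exactly one root $y$ in $[0,1]$; and if $(\omega_n+\mu)(\mu+r)=\beta_0\omega_n+\beta_n\mu$, then $x=0$ is a root.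
   Context: Model: Fix an integer $n\ge 1$ and parameters $\delta\ge 0$ (rate of waning immunity), $\omega\ge 0$ (vaccination rate), $r>0$ (recovery rate), $\mu>0$ (birth = death rate), coverages $p_0=0$, $p_1,\dots,p_n\in[0,1]$, and transmission rates $0\le\beta_0\le\beta_1\le\dots\le\beta_n$ with $\beta_0<\beta_n$. Write $\omega_i=p_i\omega$, $\delta_i=(1-p_i)\delta$ (so $\delta_0=\delta$). The ODE system for $(S_0,\dots,S_n,I)$ is $$S_0'=\sum_{i=1}^n\omega_iS_i-\delta S_0+rI-\beta_0IS_0-\mu S_0,$$ $$S_i'=-\omega_iS_i+\delta_{i-1}S_{i-1}-\delta_iS_i-\beta_iIS_i-\mu S_i\quad(1\le i\le n-1),$$ $$S_n'=\mu-\omega_nS_n+\delta_{n-1}S_{n-1}-\beta_nIS_n-\mu S_n,$$ $$I'=I\sum_{i=0}^n\beta_iS_i-rI-\mu I,$$ with the normalization $\sum_iS_i+I=1$. An endemic equilibrium is an equilibrium $(S_0^*,\dots,S_n^*,I^* )$ of this system satisfying the normalization with $I^*\neq0$. *)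

(* Defs.v *)
From HB Require Import structures.
From mathcomp Require Import all_boot all_order all_algebra.
From mathcomp Require Import reals.
Set Implicit Arguments. Unset Strict Implicit. Unset Printing Implicit Defensive.
Import Order.TTheory GRing.Theory Num.Theory.
Local Open Scope ring_scope.

(* Compartments are indexed by nat; only indices 0..n matter.
   p i = coverage, omega_i = p i * omega, delta_i = (1 - p i) * delta. *)
Definition is_equilibrium (R : realType) (n : nat) (delta omega r mu : R)
  (p beta : nat -> R) (S : nat -> R) (I : R) : Prop :=
  let w i := p i * omega in
  let d i := (1 - p i) * delta in
  [/\ \sum_(1 <= i < n.+1) w i * S i - delta * S 0%N + r * I
        - beta 0%N * I * S 0%N - mu * S 0%N = 0,
      (forall i, (1 <= i < n)%N ->
        - w i * S i + d i.-1 * S i.-1 - d i * S i - beta i * I * S i - mu * S i = 0),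
      mu - w n * S n + d n.-1 * S n.-1 - beta n * I * S n - mu * S n = 0,
      I * (\sum_(0 <= i < n.+1) beta i * S i) - r * I - mu * I = 0 &
      \sum_(0 <= i < n.+1) S i + I = 1].

Definition is_endemic_equilibrium (R : realType) (n : nat) (delta omega r mu : R)
  (p beta : nat -> R) (S : nat -> R) (I : R) : Prop :=
  is_equilibrium n delta omega r mu p beta S I /\ I <> 0.

Definition is_root_eq (R : realType) (b0 bn wn r mu x : R) : Prop :=
  [/\ b0 * x + mu <> 0, bn * x + mu + wn <> 0 &
      1 + r / (b0 * x + mu) - bn / (bn * x + mu + wn)
        - wn * b0 / ((b0 * x + mu) * (bn * x + mu + wn)) = 0].

(* Main.v *)
Require Import Defs.
From HB Require Import structures.
From mathcomp Require Import all_boot all_order all_algebra.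
From mathcomp Require Import reals.
From mathcomp Require Import ring lra zify.
Import Order.TTheory GRing.Theory Num.Theory.
Local Open Scope ring_scope.

Definition Qf {R : realType} (b0 bn wn r mu x : R) : R :=
  (b0 * x + mu) * (bn * x + mu + wn) + r * (bn * x + mu + wn) - bn * (b0 * x + mu) - wn * b0.

Lemma ident (R : realType) (b0 bn wn r mu x E F e d S0 Sn : R) :
  E + wn*Sn - d*S0 + r*x - b0*x*S0 - mu*S0 = 0 ->
  mu - wn*Sn + e - bn*x*Sn - mu*Sn = 0 ->
  b0*S0 + F + bn*Sn = r + mu ->
  mu * Qf b0 bn wn r mu x = b0*(bn*x+mu+wn)*E + (b0*wn + bn*(b0*x+mu))*e - b0*(bn*x+mu+wn)*d*S0 + (b0*x+mu)*(bn*x+mu+wn)*F.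
Proof.
move=> ha hb hc. rewrite /Qf.
have -> : F = r + mu - b0*S0 - bn*Sn by lra.
have -> : E = - (wn*Sn - d*S0 + r*x - b0*x*S0 - mu*S0) by lra.
have -> : e = - (mu - wn*Sn - bn*x*Sn - mu*Sn) by lra.
ring.
Qed.
Lemma beta_mono (R : realType) (n : nat) (beta : nat -> R) :
  (forall i, (i < n)%N -> beta i <= beta i.+1) ->
  forall i, (i <= n)%N -> beta 0%N <= beta i /\ beta i <= beta n.
Proof.
move=> hb.
have up : forall k i, (i + k = n)%N -> beta i <= beta n.
  elim=> [|k IH] i hik; first by rewrite addn0 in hik; rewrite hik.
  apply: le_trans (IH i.+1 _); last by rewrite addSnnS.
  apply: hb; rewrite -hik; lia.
have lo : forall i, (i <= n)%N -> beta 0%N <= beta i.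
  elim=> [|i IH] hi //; apply: le_trans (IH (ltnW hi)) (hb _ hi).
move=> i hi; split; first exact: lo.
apply: (up (n - i)%N); lia.
Qed.

Lemma telesc (R : realType) (n : nat) (c d S : nat -> R) :
  (forall i, (1 <= i < n)%N -> c i * S i = d i.-1 * S i.-1 - d i * S i) ->
  forall m, (1 <= m <= n)%N ->
  \sum_(1 <= i < m) c i * S i = d 0%N * S 0%N - d m.-1 * S m.-1.
Proof.
move=> h; elim=> [|m IH] //= hm.
case: m IH hm => [|m] IH hm; first by rewrite big_geq // subrr.
rewrite big_nat_recr //= IH; last by lia.
rewrite h /=; last by lia.
lra.
Qed.

Lemma sum_nat_le (R : realType) (m n : nat) (f g : nat -> R) :
  (forall i, (m <= i < n)%N -> f i <= g i) ->
  \sum_(m <= i < n) f i <= \sum_(m <= i < n) g i.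
Proof.
move=> h; rewrite big_nat_cond [X in _ <= X]big_nat_cond.
by apply: ler_sum => i /andP[hi _]; apply: h.
Qed.

Lemma sum_nat_ge0 (R : realType) (m n : nat) (f : nat -> R) :
  (forall i, (m <= i < n)%N -> 0 <= f i) -> 0 <= \sum_(m <= i < n) f i.
Proof.
move=> h; have := @sum_nat_le R m n (fun=> 0) f h.
by rewrite big1_eq.
Qed.

Lemma sum_nat_le0 (R : realType) (m n : nat) (f : nat -> R) :
  (forall i, (m <= i < n)%N -> f i <= 0) -> \sum_(m <= i < n) f i <= 0.
Proof.
move=> h; have := @sum_nat_le R m n f (fun=> 0) h.
by rewrite big1_eq.
Qed.

Lemma sign_prop {R : realType} {c a s t : R} : 0 < c -> 0 <= a -> c * t = a * s ->
  (0 <= s -> 0 <= t) /\ (s <= 0 -> t <= 0).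
Proof. move=> hc ha h; split=> hs; nra. Qed.
Definition Kf {R : realType} (b0 bn wn mu : R) : R :=
  (mu*b0*(bn+mu+wn) + mu*(b0*wn + bn*(b0+mu)) + mu*b0*(bn+mu+wn) + (b0+mu)*(bn+mu+wn)*bn) / (mu^+2).

Lemma core (R : realType) (b0 bn wn r mu delta I S0 Sn E F M e : R) :
  0 <= b0 -> b0 <= bn -> 0 <= wn -> 0 < r -> 0 < mu -> 0 <= delta -> 0 < I -> I <= 1 ->
  E + wn*Sn - delta*S0 + r*I - b0*I*S0 - mu*S0 = 0 ->
  mu - wn*Sn + e - bn*I*Sn - mu*Sn = 0 ->
  b0*S0 + F + bn*Sn = r + mu ->
  S0 + M + Sn + I = 1 ->
  E + I*F + mu*M = delta*S0 - e ->
  (0 <= S0 -> [/\ 0 <= E, 0 <= F, 0 <= M, 0 <= e & F <= bn * M]) ->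
  (S0 <= 0 -> [/\ E <= 0, F <= 0, M <= 0 & e <= 0]) ->
  `|Qf b0 bn wn r mu I| <= Kf b0 bn wn mu * delta.
Proof.
move=> hb0 hb0n hwn hr hmu hd hI0 hI1 H0 Hn HI Hs T pos neg.
set D := bn*I + mu + wn.
have Dpos : 0 < D by rewrite /D; nra.
have hSn : D * Sn = mu + e by rewrite /D; lra.
have b0Ipos : 0 < b0*I + mu by nra.
have S0ge0 : 0 <= S0.
  rewrite leNgt; apply/negP => S0neg.
  have [En Fn Mn en] := neg (ltW S0neg).
  have hX : S0*(b0*I+mu) = -e - I*F - mu*M + wn*Sn + r*I by lra.
  have hDX : D*(S0*(b0*I+mu)) = -e*(bn*I+mu) - D*(I*F) - D*(mu*M) + wn*mu + D*(r*I).
    have h : wn*(D*Sn) = wn*(mu+e) by rewrite hSn.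
    rewrite hX; rewrite /D in h *; lra.
  have t1 : D*(S0*(b0*I+mu)) < 0.
    by rewrite pmulr_rlt0 // pmulr_llt0.
  have t2 : 0 <= -e*(bn*I+mu) by apply: mulr_ge0; nra.
  have t3 : 0 <= - (D*(I*F)) by rewrite -mulrN; apply: mulr_ge0; nra.
  have t4 : 0 <= - (D*(mu*M)) by rewrite -mulrN; apply: mulr_ge0; nra.
  have t5 : 0 <= wn*mu by nra.
  have t6 : 0 <= D*(r*I) by apply: mulr_ge0; nra.
  lra.
have [Ep Fp Mp ep FM] := pos S0ge0.
have Snp : 0 <= Sn.
  have : 0 < D*Sn by lra.
  by rewrite pmulr_rgt0 // => /ltW.
have S01 : S0 <= 1 by lra.
have bnp : 0 <= bn := le_trans hb0 hb0n.
have D0 : 0 <= D := ltW Dpos.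
have b0Ip : 0 <= b0*I+mu := ltW b0Ipos.
have I0' : 0 <= I := ltW hI0.
have mu0 : 0 <= mu := ltW hmu.
have IF : 0 <= I*F := mulr_ge0 I0' Fp.
have dS : delta*S0 <= delta by rewrite -[X in _ <= X]mulr1; apply: ler_wpM2l.
have dS0 : 0 <= delta*S0 by apply: mulr_ge0.
have muM : 0 <= mu*M := mulr_ge0 mu0 Mp.
have Ed : E <= delta by lra.
have ed : e <= delta by lra.
have Md : mu*M <= delta by lra.
have Fd : mu*F <= bn*delta.
  have h1 : mu*F <= bn*(mu*M).
    rewrite mulrCA; exact: (ler_wpM2l mu0 FM).
  exact: (le_trans h1 (ler_wpM2l bnp Md)).
have Q := @ident R _ _ _ _ _ _ _ _ _ _ _ _ H0 Hn HI.
rewrite -/D in Q.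
have D1 : D <= bn+mu+wn.
  rewrite /D; have := ler_wpM2l bnp hI1; rewrite mulr1 => h. lra.
have bI : b0*I+mu <= b0+mu.
  have := ler_wpM2l hb0 hI1; rewrite mulr1 => h. lra.
have T1 : b0*D*E <= b0*(bn+mu+wn)*delta.
  exact: (ler_pM (mulr_ge0 hb0 D0) Ep (ler_wpM2l hb0 D1) Ed).
have T1p : 0 <= b0*D*E := mulr_ge0 (mulr_ge0 hb0 D0) Ep.
have c2 : b0*wn + bn*(b0*I+mu) <= b0*wn + bn*(b0+mu).
  by rewrite lerD2l; exact: (ler_wpM2l bnp bI).
have c2p : 0 <= b0*wn + bn*(b0*I+mu) := addr_ge0 (mulr_ge0 hb0 hwn) (mulr_ge0 bnp b0Ip).
have T2 : (b0*wn + bn*(b0*I+mu))*e <= (b0*wn + bn*(b0+mu))*delta by apply: ler_pM.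
have T2p : 0 <= (b0*wn + bn*(b0*I+mu))*e by apply: mulr_ge0.
have T3 : b0*D*delta*S0 <= b0*(bn+mu+wn)*delta.
  rewrite -mulrA.
  exact: (ler_pM (mulr_ge0 hb0 D0) dS0 (ler_wpM2l hb0 D1) dS).
have T3p : 0 <= b0*D*delta*S0.
  rewrite -mulrA; exact: (mulr_ge0 (mulr_ge0 hb0 D0) dS0).
have T4 : (b0*I+mu)*D*(mu*F) <= (b0+mu)*(bn+mu+wn)*(bn*delta).
  exact: (ler_pM (mulr_ge0 b0Ip D0) (mulr_ge0 mu0 Fp) (ler_pM b0Ip D0 bI D1) Fd).
have T4p : 0 <= (b0*I+mu)*D*(mu*F) := mulr_ge0 (mulr_ge0 b0Ip D0) (mulr_ge0 mu0 Fp).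
have QQ : mu * (mu * Qf b0 bn wn r mu I) = mu*(b0*D*E) + mu*((b0*wn + bn*(b0*I+mu))*e)
   - mu*(b0*D*delta*S0) + (b0*I+mu)*D*(mu*F) by rewrite Q; ring.
have m1 := ler_wpM2l (ltW hmu) T1.
have m2 := ler_wpM2l (ltW hmu) T2.
have m3 := ler_wpM2l (ltW hmu) T3.
have m1p := mulr_ge0 (ltW hmu) T1p.
have m2p := mulr_ge0 (ltW hmu) T2p.
have m3p := mulr_ge0 (ltW hmu) T3p.
have mu2 : 0 < mu^+2 by apply: exprn_gt0.
rewrite /Kf mulrAC ler_pdivlMr //.
rewrite -(gtr0_norm mu2) -normrM.
have -> : Qf b0 bn wn r mu I * mu ^+ 2 = mu * (mu * Qf b0 bn wn r mu I) by rewrite expr2; ring.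
rewrite QQ ler_norml; clear -QQ m1 m2 m3 m1p m2p m3p T4 T4p; apply/andP; split; lra.
Qed.
Lemma eq_bound (R : realType) (n : nat) (delta omega r mu : R) (p beta S : nat -> R) (I : R) :
  (1 <= n)%N -> 0 <= omega -> 0 < r -> 0 < mu ->
  p 0%N = 0 -> (forall i, (1 <= i <= n)%N -> 0 <= p i <= 1) ->
  0 <= beta 0%N -> (forall i, (i < n)%N -> beta i <= beta i.+1) ->
  beta 0%N < beta n -> 0 <= delta ->
  is_endemic_equilibrium n delta omega r mu p beta S I -> 0 <= I <= 1 ->
  `|Qf (beta 0%N) (beta n) (p n * omega) r mu I| <= Kf (beta 0%N) (beta n) (p n * omega) mu * delta.
Proof.
move=> n1 om0 r0 mu0 p0 pb b00 bmono b0n d0 [[H0 Hmid Hn HI Hsum] Inz] /andP[I0 I1].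
have bm := @beta_mono R n beta bmono.
set w := fun i => p i * omega.
set d := fun i => (1 - p i) * delta.
have w0 : forall i, (1 <= i <= n)%N -> 0 <= w i.
  move=> i hi; have /andP[h1 h2] := pb i hi; exact: (mulr_ge0 h1 om0).
have dge0 : forall i, (i <= n)%N -> 0 <= d i.
  case=> [|i] hi; first by rewrite /d p0 subr0 mul1r.
  have /andP[h1 h2] := pb i.+1 hi; apply: mulr_ge0 => //; rewrite subr_ge0 //.
have Ipos : 0 < I by rewrite lt_def I0 andbT; apply/eqP.
have bge0 : forall i, (i <= n)%N -> 0 <= beta i.
  by move=> i hi; have [h1 h2] := bm i hi; exact: (le_trans b00 h1).
have mid : forall i, (1 <= i < n)%N -> (1 <= i <= n)%N.
  by move=> i /andP[h1 h2]; rewrite h1 ltnW.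
have sign : forall j, (j < n)%N ->
   (0 <= S 0%N -> 0 <= S j) /\ (S 0%N <= 0 -> S j <= 0).
  elim=> [|j IH] hj; first by split.
  have [IH1 IH2] := IH (ltnW hj).
  have e := Hmid j.+1 hj. rewrite /= in e.
  have hc : 0 < w j.+1 + d j.+1 + beta j.+1 * I + mu.
    have h := addr_ge0 (addr_ge0 (w0 j.+1 (ltnW hj)) (dge0 j.+1 (ltnW hj)))
       (mulr_ge0 (bge0 j.+1 (ltnW hj)) I0).
    move: h mu0; clear; move=> h mu0; lra.
  have e' : (w j.+1 + d j.+1 + beta j.+1 * I + mu) * S j.+1 = d j * S j.
    rewrite /w /d; lra.
  have dj := dge0 j (ltnW (ltnW hj)).
  have [h1 h2] := sign_prop hc dj e'.
  by split=> hS; [apply: h1; apply: IH1|apply: h2; apply: IH2].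
have tel := @telesc R n (fun i => w i + beta i * I + mu) d S.
have tel' : \sum_(1 <= i < n) (w i + beta i * I + mu) * S i = delta * S 0%N - d n.-1 * S n.-1.
  rewrite tel ?n1 ?leqnn //; first by rewrite /d p0 subr0 mul1r.
  move=> i hi; have := Hmid i hi; rewrite /w /d; lra.
set E := \sum_(1 <= i < n) w i * S i.
set F := \sum_(1 <= i < n) beta i * S i.
set M := \sum_(1 <= i < n) S i.
have sumEFM : \sum_(1 <= i < n) (w i + beta i * I + mu) * S i = E + I * F + mu * M.
  rewrite /E /F /M mulr_sumr mulr_sumr -!big_split /=.
  by apply: eq_bigr => i _; ring.
rewrite sumEFM in tel'.
have sw : \sum_(1 <= i < n.+1) p i * omega * S i = E + w n * S n by rewrite big_nat_recr.
have sb : \sum_(0 <= i < n.+1) beta i * S i = beta 0%N * S 0%N + F + beta n * S n.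
  by rewrite big_nat_recr //= big_ltn.
have ss : \sum_(0 <= i < n.+1) S i = S 0%N + M + S n.
  by rewrite big_nat_recr //= big_ltn.
rewrite sw in H0; rewrite sb in HI; rewrite ss in Hsum.
have HI' : beta 0%N * S 0%N + F + beta n * S n = r + mu.
  have : I * (beta 0%N * S 0%N + F + beta n * S n - r - mu) = 0 by lra.
  move/eqP; rewrite mulf_eq0 => /orP [/eqP h|/eqP h]; [by move: Inz; rewrite h|lra].
set e := d n.-1 * S n.-1 in tel' Hn.
have sn1 : (n.-1 < n)%N by rewrite ltn_predL.
have [sgn1 sgn2] := sign n.-1 sn1.
have dn1 : 0 <= d n.-1 by apply: dge0; exact: leq_pred.
have wn0 : 0 <= p n * omega by have := w0 n; rewrite /w; apply; rewrite n1 leqnn.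
have b0bn : beta 0%N <= beta n by apply: ltW.
apply: (@core R (beta 0%N) (beta n) (p n * omega) r mu delta I (S 0%N) (S n) E F M e) => //.
- move=> hS; split.
  + apply: sum_nat_ge0 => i hi; have [h1 _] := sign i (andP hi).2.
    by apply: mulr_ge0; [apply: w0; apply: mid| apply: h1].
  + apply: sum_nat_ge0 => i hi; have [h1 _] := sign i (andP hi).2.
    by apply: mulr_ge0; [apply: bge0; exact: (ltnW (andP hi).2)| apply: h1].
  + apply: sum_nat_ge0 => i hi; have [h1 _] := sign i (andP hi).2.
    by apply: h1.
  + by apply: mulr_ge0 => //; apply: sgn1.
  + rewrite /F /M mulr_sumr; apply: sum_nat_le => i hi.
    have [h1 _] := sign i (andP hi).2.
    apply: ler_wpM2r; first by apply: h1.
    by have [] := bm i (ltnW (andP hi).2).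
- move=> hS; split.
  + apply: sum_nat_le0 => i hi; have [_ h2] := sign i (andP hi).2.
    by rewrite mulrC; apply: mulr_le0_ge0; [apply: h2| apply: w0; apply: mid].
  + apply: sum_nat_le0 => i hi; have [_ h2] := sign i (andP hi).2.
    by rewrite mulrC; apply: mulr_le0_ge0; [apply: h2| apply: bge0; exact: (ltnW (andP hi).2)].
  + apply: sum_nat_le0 => i hi; have [_ h2] := sign i (andP hi).2.
    by apply: h2.
  + by rewrite /e mulrC; apply: mulr_le0_ge0 => //; apply: sgn2.
Qed.
Lemma sqrt_facts {R : realType} {d : R} : 0 <= d ->
  0 <= Num.sqrt d /\ Num.sqrt d * Num.sqrt d = d.
Proof. move=> hd; split; first exact: sqrtr_ge0. by rewrite -expr2 sqr_sqrtr. Qed.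

Lemma quad_near {R : realType} (a b c K : R) : 0 <= a -> (a = 0 -> 0 < b) -> 0 <= K ->
  exists C, 0 < C /\ exists d1, 0 < d1 /\ exists y1 y2,
   forall dl x, 0 <= dl -> dl < d1 -> `|a*x*x + b*x + c| <= K*dl ->
     (a*y1*y1 + b*y1 + c = 0 /\ `|x - y1| <= C * Num.sqrt dl) \/
     (a*y2*y2 + b*y2 + c = 0 /\ `|x - y2| <= C * Num.sqrt dl).
Proof.
move=> ha hab hK.
have [a0|an0] := eqVneq a 0.
  have hb := hab a0.
  have bn0 : b != 0 by apply: lt0r_neq0.
  exists (K/b + 1); split; first by have := divr_ge0 hK (ltW hb); lra.
  exists 1; split; first exact: ltr01.
  exists (-c/b), (-c/b) => dl x hd hd1 hQ; left; split.
    rewrite a0; field => //.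
  have [s0 ss] := sqrt_facts hd.
  set s := Num.sqrt dl in s0 ss *.
  have s1 : s <= 1 by nra.
  have ds : dl <= s by nra.
  rewrite a0 !mul0r add0r in hQ.
  have hxy : `|x - - c / b| * b = `|b * x + c|.
    have -> : x - - c / b = (b*x + c) / b by field.
    by rewrite normrM normfV (gtr0_norm hb) mulfVK.
  rewrite -(ler_pM2r hb) hxy.
  have -> : (K / b + 1) * s * b = K * s + b * s by field.
  have := ler_wpM2l hK ds; have := mulr_ge0 (ltW hb) s0; lra.
have apos : 0 < a by rewrite lt_def an0.
set Dl := b*b - 4*a*c.
have [Dneg|Dpos] := ltrP Dl 0.
  exists 1; split; first exact: ltr01.
  exists (- Dl / (4*a*(K+1))); split.
    apply: divr_gt0; first lra. apply: mulr_gt0; [|lra]. apply: mulr_gt0 => //; lra.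
  exists 0, 0 => dl x hd hd1 hQ; exfalso.
  have h4 : 0 < 4*a*(K+1) by apply: mulr_gt0; [apply: mulr_gt0 => //; lra|lra].
  rewrite ltr_pdivlMr // in hd1.
  have hQ' : a*x*x + b*x + c <= K * dl by move: hQ; rewrite ler_norml => /andP[].
  have e1 : 4*a*(a*x*x + b*x + c) = (2*a*x+b)^+2 - Dl by rewrite /Dl; ring.
  have e2 : 0 <= (2*a*x+b)^+2 by apply: sqr_ge0.
  have e3 : 4*a*(a*x*x + b*x + c) <= 4*a*(K*dl) by apply: ler_wpM2l => //; lra.
  have e4 : 4*a*(K*dl) <= 4*a*(K+1)*dl.
    rewrite mulrA; apply: ler_wpM2r => //; apply: ler_wpM2l; lra.
  lra.
have [sD0 sDD] := sqrt_facts Dpos.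
set sD := Num.sqrt Dl in sD0 sDD.
have [k0 kk] := sqrt_facts (divr_ge0 hK ha).
set k := Num.sqrt (K / a) in k0 kk.
exists (k + 1); split; first lra.
exists 1; split; first exact: ltr01.
have an : a != 0 by apply: lt0r_neq0.
have a2 : 2*a != 0 by apply: lt0r_neq0; lra.
have fac : forall x, a*x*x + b*x + c = a * ((x - (-b + sD)/(2*a)) * (x - (-b - sD)/(2*a))).
  move=> x.
  have -> : a * ((x - (-b + sD)/(2*a)) * (x - (-b - sD)/(2*a))) = a*x*x + b*x + (b*b - sD*sD)/(4*a).
    by field.
  by rewrite sDD /Dl; field.
exists ((-b + sD)/(2*a)); exists ((-b - sD)/(2*a)); move=> dl x hd hd1 hQ.
have r1 : a*((-b + sD)/(2*a))*((-b + sD)/(2*a)) + b*((-b + sD)/(2*a)) + c = 0.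
  by rewrite fac subrr mul0r mulr0.
have r2 : a*((-b - sD)/(2*a))*((-b - sD)/(2*a)) + b*((-b - sD)/(2*a)) + c = 0.
  by rewrite fac subrr mulr0 mulr0.
rewrite fac normrM (gtr0_norm apos) normrM in hQ.
set y1 := (-b + sD)/(2*a) in r1 hQ *.
set y2 := (-b - sD)/(2*a) in r2 hQ *.
have [t0 tt] := sqrt_facts hd.
set t := Num.sqrt dl in t0 tt *.
have [h1|h1] := lerP `|x - y1| ((k+1)*t); first by left.
have [h2|h2] := lerP `|x - y2| ((k+1)*t); first by right.
exfalso.
have Ct : 0 <= (k+1)*t by apply: mulr_ge0 => //; lra.
have pr := ltr_pM Ct Ct h1 h2.
have C2 : K/a <= (k+1)*(k+1) by rewrite -kk; nra.
have e1 : K * dl <= a * ((k+1)*t * ((k+1)*t)).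
  have -> : a * ((k+1)*t * ((k+1)*t)) = a * ((k+1)*(k+1)) * (t*t) by ring.
  rewrite tt; apply: ler_wpM2r => //.
  have h := ler_wpM2l (ltW apos) C2; by rewrite mulrC divfK // in h.
have e2 : a * ((k+1)*t * ((k+1)*t)) < a * (`|x - y1| * `|x - y2|) by rewrite ltr_pM2l.
lra.
Qed.
Lemma Qf_expand {R : realType} (b0 bn wn r mu x : R) :
  Qf b0 bn wn r mu x = (b0*bn)*x*x + (b0*(mu+wn) + bn*mu + r*bn - bn*b0)*x + ((mu+wn)*(mu+r) - bn*mu - wn*b0).
Proof. rewrite /Qf; ring. Qed.

Lemma root_of_Q {R : realType} (b0 bn wn r mu x : R) :
  b0*x+mu != 0 -> bn*x+mu+wn != 0 -> Qf b0 bn wn r mu x = 0 -> is_root_eq b0 bn wn r mu x.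
Proof.
move=> h1 h2 hQ; rewrite /is_root_eq; split; [exact/eqP|exact/eqP|].
have -> : 1 + r / (b0 * x + mu) - bn / (bn * x + mu + wn)
        - wn * b0 / ((b0 * x + mu) * (bn * x + mu + wn)) =
   Qf b0 bn wn r mu x / ((b0 * x + mu) * (bn * x + mu + wn)).
  by rewrite /Qf; field; rewrite ?h1 ?h2.
by rewrite hQ mul0r.
Qed.

Lemma Q_of_root {R : realType} (b0 bn wn r mu x : R) :
  is_root_eq b0 bn wn r mu x -> Qf b0 bn wn r mu x = 0.
Proof.
case=> h1' h2' h3.
have h1 : b0*x+mu != 0 by apply/eqP.
have h2 : bn*x+mu+wn != 0 by apply/eqP.
have -> : Qf b0 bn wn r mu x = (1 + r / (b0 * x + mu) - bn / (bn * x + mu + wn)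
        - wn * b0 / ((b0 * x + mu) * (bn * x + mu + wn))) * ((b0 * x + mu) * (bn * x + mu + wn)).
  by rewrite /Qf; field; rewrite ?h1 ?h2.
by rewrite h3 mul0r.
Qed.

Lemma sqrt_lt {R : realType} (d z : R) : 0 <= d -> 0 < z -> d < z * z -> Num.sqrt d < z.
Proof. move=> hd hz hdz; have [s0 ss] := sqrt_facts hd; nra. Qed.

Lemma near_root {R : realType} (b0 bn wn r mu y : R) :
  0 <= b0 -> b0 <= bn -> 0 < bn -> 0 <= wn -> 0 < mu -> -(mu/(2*bn)) < y ->
  Qf b0 bn wn r mu y = 0 -> is_root_eq b0 bn wn r mu y.
Proof.
move=> hb0 hbn bnp hwn hmu hy hQ.
have h1 : - (mu/2) < bn * y.
  have bn0 : bn != 0 by apply: lt0r_neq0.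
  have e : bn * (-(mu/(2*bn))) = -(mu/2) by field.
  by have := hy; rewrite -(ltr_pM2l bnp) e.
have h2 : - (mu/2) < b0 * y.
  have [y0|y0] := lerP 0 y; first by have := mulr_ge0 hb0 y0; lra.
  have : bn * y <= b0 * y by rewrite ler_wnM2r //; lra.
  lra.
apply: root_of_Q => //; apply: lt0r_neq0; lra.
Qed.
Theorem lemma1 (R : realType) (n : nat) (omega r mu : R) (p beta : nat -> R) :
  (1 <= n)%N -> 0 <= omega -> 0 < r -> 0 < mu ->
  p 0%N = 0 -> (forall i, (1 <= i <= n)%N -> 0 <= p i <= 1) ->
  0 <= beta 0%N -> (forall i, (i < n)%N -> beta i <= beta i.+1) ->
  beta 0%N < beta n ->
  let wn := p n * omega in
  let root := is_root_eq (beta 0%N) (beta n) wn r mu in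
  (* main claim: equilibrium values I* in [0,1] lie within C sqrt(delta) of a root *)
  (exists C : R, 0 < C /\ exists delta0 : R, 0 < delta0 /\
     forall delta : R, 0 <= delta -> delta < delta0 ->
     forall (S : nat -> R) (I : R),
       is_endemic_equilibrium n delta omega r mu p beta S I -> 0 <= I <= 1 ->
       exists y : R, root y /\ `|I - y| <= C * Num.sqrt delta)
  /\
  (* no roots in [0,1] => no endemic equilibria with I* in [0,1] for small delta *)
  ((forall x : R, root x -> ~ (0 <= x <= 1)) ->
     exists delta0 : R, 0 < delta0 /\
     forall delta : R, 0 <= delta -> delta < delta0 ->
     forall (S : nat -> R) (I : R),
       is_endemic_equilibrium n delta omega r mu p beta S I -> ~ (0 <= I <= 1))
  /\
  ((wn + mu) * (mu + r) > beta 0%N * wn + beta n * mu ->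
     forall x : R, root x -> ~ (0 <= x <= 1))
  /\
  ((wn + mu) * (mu + r) < beta 0%N * wn + beta n * mu ->
     exists y : R, (0 <= y <= 1 /\ root y) /\
       forall z : R, 0 <= z <= 1 -> root z -> z = y)
  /\
  ((wn + mu) * (mu + r) = beta 0%N * wn + beta n * mu -> root 0).
Proof.
move=> n1 om0 r0 mu0 p0 pb b00 bmono b0n wn root.
have wn0 : 0 <= wn.
  have /andP[h1 _] := pb n (introT andP (conj n1 (leqnn n))); exact: (mulr_ge0 h1 om0).
have EB := fun delta S I hd Heq HI =>
  @eq_bound R n delta omega r mu p beta S I n1 om0 r0 mu0 p0 pb b00 bmono b0n hd Heq HI.
move: EB; rewrite -/wn.
set b0 := beta 0%N; set bn := beta n => EB.
have {b00}b00 : 0 <= b0 := b00.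
have bnp : 0 < bn by rewrite /bn /b0 in b00 b0n *; lra.
have b0bn : b0 <= bn by apply: ltW.
set a := b0*bn.
set b := b0*(mu+wn) + bn*mu + r*bn - bn*b0.
set c := (mu+wn)*(mu+r) - bn*mu - wn*b0.
have QE : forall x, Qf b0 bn wn r mu x = a*x*x + b*x + c by move=> x; rewrite Qf_expand.
have ha : 0 <= a := mulr_ge0 b00 (ltW bnp).
have hab : a = 0 -> 0 < b.
  move=> /eqP; rewrite /a mulf_eq0 (negbTE (lt0r_neq0 bnp)) orbF => /eqP b0z.
  rewrite /b b0z !mul0r mulr0 add0r subr0.
  have := mulr_gt0 bnp mu0; have := mulr_gt0 r0 bnp; lra.
have hK : 0 <= Kf b0 bn wn mu.
  rewrite /Kf; apply: divr_ge0; last exact: (ltW (exprn_gt0 2 mu0)).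
  have m0 : 0 <= mu := ltW mu0. have bn0 : 0 <= bn := ltW bnp.
  have /andP[pn0 _] := pb n (introT andP (conj n1 (leqnn n))).
  by repeat (apply: addr_ge0 || apply: mulr_ge0 || done).
have [C [hC [d1 [hd1 [y1 [y2 Hq]]]]]] := @quad_near R a b c (Kf b0 bn wn mu) ha hab hK.
have key : exists d0, 0 < d0 /\ forall delta, 0 <= delta -> delta < d0 ->
    forall S I, is_endemic_equilibrium n delta omega r mu p beta S I -> 0 <= I <= 1 ->
    exists y, (y = y1 \/ y = y2) /\ root y /\ `|I - y| <= C * Num.sqrt delta.
  set z := mu/(2*bn*C).
  have zp : 0 < z by apply: divr_gt0 => //; apply: mulr_gt0 => //; apply: mulr_gt0 => //; lra.
  exists (Num.min d1 (z*z)); split; first by rewrite lt_min hd1 mulr_gt0.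
  move=> delta hd; rewrite lt_min => /andP[hdd1 hdz] S I Heq HI.
  have hQ := EB delta S I hd Heq HI.
  rewrite QE in hQ.
  have Cz : C * Num.sqrt delta < mu/(2*bn).
    have -> : mu/(2*bn) = C * z by rewrite /z; field; rewrite ?(lt0r_neq0 hC) ?(lt0r_neq0 bnp).
    by rewrite ltr_pM2l // sqrt_lt.
  have fin : forall y, a*y*y + b*y + c = 0 -> `|I - y| <= C * Num.sqrt delta -> root y.
    move=> y hy hIy; apply: near_root => //; last exact: (etrans (QE y) hy).
    rewrite -/bn.
    move: hIy; rewrite ler_norml => /andP[h1 h2]; case/andP: HI => HI0 HI1; lra.
  have [[r1 h1]|[r2 h2]] := Hq delta I hd hdd1 hQ.
    by exists y1; split; [left|split=> //; apply: fin].
  by exists y2; split; [right|split=> //; apply: fin].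
have [d0 [hd0 Hkey]] := key.
split.
  exists C; split=> //; exists d0; split=> // delta hd hdd S I Heq HI.
  by have [y [_ [hr hy]]] := Hkey delta hd hdd S I Heq HI; exists y.
have Qroot : forall x, root x -> a*x*x + b*x + c = 0.
  by move=> x rx; rewrite -QE; exact: (@Q_of_root R b0 bn wn r mu x rx).
have rootQ : forall x, 0 <= x -> a*x*x + b*x + c = 0 -> root x.
  move=> x x0 hx; apply: near_root => //; last exact: (etrans (QE x) hx).
  rewrite -/bn; have : 0 < mu/(2*bn) by apply: divr_gt0 => //; lra.
  lra.
split.
  move=> noroot.
  pose g := fun y : R => if y < 0 then -y else if 1 < y then y - 1 else 1.
  have gpos : forall y, 0 < g y.
    move=> y; rewrite /g; case: ifP => h; first lra.
    by case: ifP => h'; [lra|exact: ltr01].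
  have gle : forall y x, root y -> 0 <= x <= 1 -> g y <= `|x - y|.
    move=> y x ry /andP[x0 x1]; rewrite /g; case: ifP => h.
      have := ler_norm (x - y); lra.
    case: ifP => h'.
      have := ler_norm (y - x); rewrite distrC; lra.
    exfalso; apply: (noroot y ry); apply/andP; split.
      by move/negbT: h; rewrite -leNgt.
    by move/negbT: h'; rewrite -leNgt.
  set eta := Num.min (g y1) (g y2).
  have etap : 0 < eta by rewrite lt_min !gpos.
  set z := eta/(2*C).
  have zp : 0 < z by apply: divr_gt0 => //; lra.
  exists (Num.min d0 (z*z)); split; first by rewrite lt_min hd0 mulr_gt0.
  move=> delta hd; rewrite lt_min => /andP[hdd0 hdz] S I Heq HI.
  have [y [hyy [ry hIy]]] := Hkey delta hd hdd0 S I Heq HI.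
  have Cz : C * Num.sqrt delta < eta/2.
    have -> : eta/2 = C * z by rewrite /z; field; rewrite ?(lt0r_neq0 hC).
    by rewrite ltr_pM2l // sqrt_lt.
  have h1 := gle y I ry HI.
  have h2 : eta <= g y by case: hyy => ->; rewrite /eta ge_min lexx ?orbT.
  lra.
split.
  move=> hc x rx /andP[x0 x1].
  have Qx := Qroot x rx.
  rewrite -/b0 -/bn in hc.
  have cpos : 0 < c by rewrite /c; lra.
  have wm : 0 < wn + mu by lra.
  have hmr : 0 < mu + r - b0.
    have : 0 < (wn + mu) * (mu + r - b0).
      have : 0 <= (bn - b0) * mu by apply: mulr_ge0; lra.
      rewrite /c in cpos; lra.
    by rewrite pmulr_rgt0.
  have bpos : 0 < b.
    have := mulr_ge0 b00 (ltW wm); have := mulr_gt0 bnp hmr; rewrite /b; lra.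
  have := mulr_ge0 (mulr_ge0 ha x0) x0; have := mulr_ge0 (ltW bpos) x0; lra.
split.
  move=> hc; rewrite -/b0 -/bn in hc.
  have cneg : c < 0 by rewrite /c; lra.
  have ac : a * c <= 0 := mulr_ge0_le0 ha (ltW cneg).
  set Dl := b*b - 4*a*c.
  have Dl0 : 0 <= Dl by have := sqr_ge0 b; rewrite /Dl expr2; lra.
  have [s0 ss] := sqrt_facts Dl0.
  set s := Num.sqrt Dl in s0 ss.
  have bs : 0 < b + s.
    have [bp|bn0] := ltrP 0 b; first lra.
    have [a0|an0] := eqVneq a 0; first by have := hab a0; lra.
    have ap : 0 < a by rewrite lt_def an0 ha.
    have acn : a * c < 0 by rewrite pmulr_rlt0.
    rewrite ltNge; apply/negP => hsb.
    have : s * s <= (-b) * (-b) by apply: ler_pM => //; lra.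
    rewrite mulrNN ss /Dl; lra.
  have bs0 : b + s != 0 by apply: lt0r_neq0.
  set y := -2*c/(b+s).
  have hy : y * (b + s) = -2*c by rewrite /y; field.
  have ypos : 0 < y by apply: divr_gt0 => //; lra.
  have Qy : a*y*y + b*y + c = 0.
    have e : (b+s)*(b+s)*(a*y*y + b*y + c) = 0.
      have -> : (b+s)*(b+s)*(a*y*y + b*y + c) =
         a*(y*(b+s))*(y*(b+s)) + b*(y*(b+s))*(b+s) + c*(b+s)*(b+s) by ring.
      rewrite hy.
      have : c*(s*s) = c*(b*b - 4*a*c) by rewrite ss.
      lra.
    move/eqP: e; rewrite mulf_eq0 mulf_eq0 (negbTE bs0) /= => /eqP //.
  have hs : 2*a*y + b = s.
    apply: (mulIf bs0).
    have -> : (2*a*y + b)*(b+s) = 2*a*(y*(b+s)) + b*(b+s) by ring.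
    rewrite hy; have := ss; rewrite /Dl; lra.
  have tay : forall z, a*z*z + b*z + c = (z - y)*(a*(z - y) + s).
    move=> z; have -> : a*z*z + b*z + c = (z - y)*(a*(z-y) + (2*a*y+b)) + (a*y*y + b*y + c) by ring.
    by rewrite Qy hs addr0.
  have say : 0 < s - a*y.
    have := tay 0; rewrite !mulr0 !add0r => h0.
    have e : y * (s - a*y) = - c by rewrite h0; ring.
    have : 0 < y * (s - a*y) by rewrite e; lra.
    by rewrite pmulr_rgt0.
  have Q1 : 0 < a + b + c.
    have := mulr_ge0 b00 (ltW mu0); have := mulr_gt0 r0 bnp.
    have := mulr_gt0 (_ : 0 < mu + wn) (_ : 0 < mu + r).
    rewrite /a /b /c; move=> h; have := h ltac:(lra) ltac:(lra); lra.
  have y1' : y <= 1.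
    rewrite leNgt; apply/negP => hy1.
    have := tay 1; rewrite !mulr1 => h1.
    have : (1 - y) * (a * (1 - y) + s) < 0.
      have hA : 0 < a*(1-y)+s by have := say; lra.
      rewrite -oppr_gt0 -mulNr; apply: mulr_gt0 => //; lra.
    lra.
  exists y; split.
    split; first by apply/andP; split; lra.
    by apply: rootQ => //; lra.
  move=> z /andP[z0 z1] rz.
  have := tay z; rewrite Qroot // => /esym /eqP; rewrite mulf_eq0 => /orP[/eqP h|/eqP h].
    lra.
  have := mulr_ge0 ha z0; lra.
move=> hc; rewrite -/b0 -/bn in hc.
apply: rootQ; first exact: lexx.
rewrite !mulr0 !add0r /c; lra.
Qed.
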